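(* Assume $X$ satisfies condition (P). Then for every $w\in W$, $$\sum_{x\in W_c,\ x\le w}\varepsilon_x\,D_{x,w}=\varepsilon_w.$$
   Context: Let $X$ be a Coxeter graph with Coxeter system $(W,S)$, length function $\ell$, Bruhat order $\le$, identity $e$; write $\varepsilon_w=(-1)^{\ell(w)}$ and $\ell(x,w)=\ell(w)-\ell(x)$. An element of $W$ is fully commutative if any two of its reduced expressions are related by a sequence of moves $ss'\leftrightarrow s's$ with $s,s'\in S$ commuting; $W_c$ denotes the set of fully commutative elements, $[x,w]_c=\{y\in W_c:x\le y\le w\}$ and $(x,w)_c=\{y\in W_c:x<y<w\}$. $\mathcal H$ is the Hecke algebra of $W$ over $\mathcal A=\mathbb Z[q^{1/2},q^{-1/2}]$ with basis $\{T_w\}_{w\in W}$ and multiplication $T_wT_s=T_{ws}$ if $\ell(ws)>\ell(w)$, $T_wT_s=qT_{ws}+(q-1)T_w$ if $\ell(ws)<\ell(w)$. $J$ is the two-sided ideal generated by the elements $\sum_{w\in\langle s,s'\rangle}T_w$ for all pairs of non-commuting $s,s'\in S$ such that $ss'$ has finite order; $TL(X)=\mathcal H/J$, $\sigma:\mathcal H\to TL(X)$ the projection, $t_w=\sigma(T_w)$. $\{t_w:w\in W_c\}$ is an $\mathcal A$-basis of $TL(X)$; for $w\in W$ the polynomials $D_{x,w}\in\mathbb Z[q]$ ($x\in W_c$) are defined by $t_w=\sum_{x\in W_c,\,x\le w}D_{x,w}t_x$, with $D_{x,w}=0$ if $x\not\le w$ (so $D_{x,w}=\delta_{x,w}$ when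 $w\in W_c$). Let $\iota$ be the ring involution of $\mathcal H$ with $\iota(q^{1/2})=q^{-1/2}$, $\iota(T_w)=(T_{w^{-1}})^{-1}$; it preserves $J$ and so induces an involution of $TL(X)$. $R_{x,w}$ are the $R$-polynomials, defined by $(T_{w^{-1}})^{-1}=\varepsilon_wq^{-\ell(w)}\sum_{x\le w}\varepsilon_xR_{x,w}T_x$, and $P_{x,w}$ are the Kazhdan–Lusztig polynomials, so that $C'_w=q^{-\ell(w)/2}\sum_{x\le w}P_{x,w}T_x$ is $\iota$-invariant, $P_{w,w}=1$, $\deg P_{x,w}\le(\ell(x,w)-1)/2$ for $x<w$. For $w\in W_c$, the polynomials $a_{y,w}\in\mathbb Z[q]$ ($y\in W_c$) are defined by $\iota(t_w)=(t_{w^{-1}})^{-1}=q^{-\ell(w)}\sum_{y\in W_c,\,y\le w}a_{y,w}t_y$, $a_{y,w}=0$ if $y\not\le w$. Let $p\mapsto\overline p$ be the ring involution of $\mathbb Z[q^{1/2},q^{-1/2}]$ with $q^{1/2}\mapsto q^{-1/2}$. For $w\in W_c$, $\{L_{x,w}\}_{x\in W_c}$ is the unique family in $\mathbb Z[q^{-1/2}]$ with $L_{x,w}=0$ if $x\not\le w$, $L_{w,w}=1$, $L_{x,w}\in q^{-1/2}\mathbb Z[q^{-1/2}]$ if $x<w$, and $L_{x,w}=\sum_{y\in[x,w]_c}q^{(\ell(x)-\ell(y))/2}a_{x,y}\,\overline{L_{y,w}}$; set $c_w=\sum_{x\in W_c,\,x\le w}q^{-\ell(x)/2}L_{x,w}t_x$.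 Condition (P) on $X$: $\sigma(C'_w)=c_w$ for all $w\in W_c$ and $\sigma(C'_w)=0$ for all $w\in W\setminus W_c$. (For finite irreducible or affine $X$, this holds exactly when $X$ has no vertex adjacent to three or more vertices and $X\neq\widetilde F_4$; in particular types $A$, $B$, $F_4$, $H_3$, $H_4$, $I_2(m)$.) *)

(* Defs.v *)
From HB Require Import structures.
From mathcomp Require Import all_boot all_order all_algebra.
From mathcomp Require Import generic_quotient fraction.
From Stdlib Require Import ClassicalEpsilon Relations.Relation_Operators.
Set Implicit Arguments. Unset Strict Implicit. Unset Printing Implicit Defensive.
Import Order.TTheory GRing.Theory Num.Theory.

Definition pdec (P : Prop) : bool :=
  if excluded_middle_informative P then true else false.
Lemma pdecP (P : Prop) : reflect P (pdec P).
Proof. by rewrite /pdec; case: excluded_middle_informative => h; constructor. Qed.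

Section Coxeter.
Variables (n : nat) (m : 'I_n -> 'I_n -> nat).
Definition alt (s t : 'I_n) (k : nat) : seq 'I_n :=
  mkseq (fun i => if odd i then t else s) k.
Inductive wstep : seq 'I_n -> seq 'I_n -> Prop :=
| ws_del u u' s : wstep (u ++ [:: s; s] ++ u') (u ++ u')
| ws_braid u u' s t : s != t -> (0 < m s t)%N ->
    wstep (u ++ alt s t (m s t) ++ u') (u ++ alt t s (m s t) ++ u').
Definition wequiv (u v : seq 'I_n) : bool := pdec (clos_refl_sym_trans _ wstep u v).
Lemma wequiv_refl : reflexive wequiv.
Proof. by move=> u; apply/pdecP; apply: rst_refl. Qed.
Lemma wequiv_sym : symmetric wequiv.
Proof. by move=> u v; apply/pdecP/pdecP; apply: rst_sym. Qed.
Lemma wequiv_trans : transitive wequiv.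
Proof. by move=> v u w /pdecP h1 /pdecP h2; apply/pdecP; apply: rst_trans h1 h2. Qed.
Canonical wequiv_equiv := EquivRel wequiv wequiv_refl wequiv_sym wequiv_trans.
Definition W := {eq_quot wequiv}%qT.

Local Open Scope quotient_scope.
Definition wof (u : seq 'I_n) : W := \pi_W u.
Definition wone : W := wof [::].
Definition wgen (s : 'I_n) : W := wof [:: s].
Definition wmul (x y : W) : W := wof (repr x ++ repr y).
Definition winv (x : W) : W := wof (rev (repr x)).

Definition haslen (w : W) (k : nat) : bool := pdec (exists u, wof u = w /\ size u = k).
Lemma haslen_ex w : exists k, haslen w k.
Proof. by exists (size (repr w)); apply/pdecP; exists (repr w); rewrite /wof reprK. Qed.
Definition len (w : W) : nat := ex_minn (haslen_ex w).

Definition redexp (w : W) (u : seq 'I_n) : Prop := wof u = w /\ size u = len w.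
Lemma redexp_ex w : exists u, (wof u == w) && (size u == len w).
Proof.
rewrite /len; case: ex_minnP => k /pdecP [u [Hu Hs]] _.
by exists u; rewrite Hu Hs !eqxx.
Qed.
Definition redword (w : W) : seq 'I_n := xchoose (redexp_ex w).

Definition reflection (t : W) : Prop := exists w s, t = wmul (wmul w (wgen s)) (winv w).
Definition bstep (x y : W) : Prop := exists t, reflection t /\ y = wmul x t /\ (len x < len y)%N.
Definition bruhat (x y : W) : Prop := clos_refl_trans _ bstep x y.
Definition blt (x y : W) : Prop := bruhat x y /\ x <> y.

Inductive cstep : seq 'I_n -> seq 'I_n -> Prop :=
| cs_comm u u' s t : m s t = 2%N -> cstep (u ++ [:: s; t] ++ u') (u ++ [:: t; s] ++ u').
Definition FC (w : W) : Prop :=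
  forall u u', redexp w u -> redexp w u' -> clos_refl_sym_trans _ cstep u u'.
End Coxeter.

Local Open Scope ring_scope.
(* coefficients: A = Z[v, v^-1] (v = q^(1/2)) inside F = Frac(Z[v]) *)
Definition F := {fraction {poly int}}.
Definition v : F := tofrac 'X.
Definition q : F := v ^+ 2.
Definition evalF (p : {poly int}) (x : F) : F := (map_poly (fun c : int => c%:~R) p).[x].
Definition Apred (f : F) : Prop := exists (p : {poly int}) (k : nat), f = evalF p v / v ^+ k.
Definition Zq (f : F) : Prop := exists p : {poly int}, f = evalF p q.
Definition Zvinv (f : F) : Prop := exists p : {poly int}, f = evalF p v^-1.
Definition Zvinv_pos (f : F) : Prop := exists p : {poly int}, f = v^-1 * evalF p v^-1.
(* bar involution: v |-> v^-1 *)
Definition bar (f : F) : F :=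
  let r := frac (repr f) in evalF r.1 v^-1 / evalF r.2 v^-1.

Definition ind (P : Prop) (c : F) : F := if pdec P then c else 0.

Section Hecke.
Variables (n : nat) (m : 'I_n -> 'I_n -> nat).
Local Notation W := (W m).
Local Notation len := (@len n m).
Local Notation bruhat := (@bruhat n m).
Local Notation FC := (@FC n m).

Definition eps (w : W) : F := (-1) ^+ len w.

Definition enumP (P : W -> Prop) : seq W :=
  epsilon (inhabits [::]) (fun s : seq W => uniq s /\ forall y, y \in s <-> P y).
Definition fsum (P : W -> Prop) (f : W -> F) : F := \sum_(y <- enumP P) f y.

(* elements of the Hecke algebra, as coefficient functions on the basis T_w *)
Definition H := W -> F.
Definition finsupp (h : H) : Prop := exists s : seq W, forall y, h y != 0 -> y \in s.
Definition Hel (h : H) : Prop := finsupp h /\ forall y, Apred (h y).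
Definition hsupp (h : H) : seq W := enumP (fun y => h y != 0).
Definition hT (w : W) : H := fun y => if y == w then 1 else 0.
Definition hzero : H := fun _ => 0.
Definition hadd (h h' : H) : H := fun y => h y + h' y.
Definition hsub (h h' : H) : H := fun y => h y - h' y.
Definition hscale (c : F) (h : H) : H := fun y => c * h y.
Definition hsumseq (I : Type) (s : seq I) (f : I -> H) : H := fun y => \sum_(i <- s) f i y.
Definition mulTs_basis (w : W) (s : 'I_n) : H :=
  let ws := wmul w (wgen m s) in
  if (len w < len ws)%N then hT ws else hadd (hscale q (hT ws)) (hscale (q - 1) (hT w)).
Definition mulTs (h : H) (s : 'I_n) : H :=
  hsumseq (hsupp h) (fun y => hscale (h y) (mulTs_basis y s)).
Definition mulTw (h : H) (w : W) : H := foldl mulTs h (redword w).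
Definition hmul (h h' : H) : H := hsumseq (hsupp h') (fun w => hscale (h' w) (mulTw h w)).

(* the involution iota: iota(T_w) = (T_{w^-1})^-1 = T_{s1}^-1 ... T_{sk}^-1 *)
Definition Tinv (s : 'I_n) : H :=
  hadd (hscale q^-1 (hT (wgen m s))) (hscale (q^-1 - 1) (hT (wone m))).
Definition iotaT (w : W) : H := foldl (fun acc s => hmul acc (Tinv s)) (hT (wone m)) (redword w).
Definition hiota (h : H) : H := hsumseq (hsupp h) (fun w => hscale (bar (h w)) (iotaT w)).

(* the ideal J and equality in TL(X) = H / J *)
Definition dihedral (s t : 'I_n) (y : W) : Prop :=
  exists u : seq 'I_n, all (fun i => (i == s) || (i == t)) u /\ wof m u = y.
Definition isgen (g : H) : Prop :=
  exists s t : 'I_n, [/\ s != t, m s t != 2%N, m s t != 0%N &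
    g = fun y => ind (dihedral s t y) 1].
Definition inJ (h : H) : Prop :=
  exists l : seq (H * H * H),
    (forall a g b, List.In (a, g, b) l -> [/\ Hel a, isgen g & Hel b]) /\
    h = hsumseq l (fun x => hmul (hmul x.1.1 x.1.2) x.2).
Definition teq (h h' : H) : Prop := inJ (hsub h h').

Definition Cp (P : W -> W -> F) (w : W) : H := fun x => v ^- len w * P x w.
Definition KLfam (P : W -> W -> F) : Prop :=
  (forall x w, Zq (P x w)) /\
  (forall x w, ~ bruhat x w -> P x w = 0) /\
  (forall w, P w w = 1) /\
  (forall x w, blt x w -> exists p : {poly int},
      P x w = evalF p q /\ (p != 0 -> (2 * (size p).-1 + len x < len w)%N)) /\
  (forall w, hiota (Cp P w) = Cp P w).

Definition afam (a : W -> W -> F) : Prop :=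
  forall w, FC w ->
    (forall y, FC y -> Zq (a y w)) /\
    (forall y, FC y -> ~ bruhat y w -> a y w = 0) /\
    teq (hiota (hT w)) (fun y => v ^- (2 * len w) * ind (FC y /\ bruhat y w) (a y w)).

Definition Lfam (a L : W -> W -> F) : Prop :=
  forall w, FC w -> L w w = 1 /\ forall x, FC x ->
    [/\ Zvinv (L x w), ~ bruhat x w -> L x w = 0, blt x w -> Zvinv_pos (L x w) &
      L x w = fsum (fun y => [/\ FC y, bruhat x y & bruhat y w])
                   (fun y => v ^+ len x / v ^+ len y * a x y * bar (L y w))].

(* c_w, as an element of H whose image in TL(X) is c_w *)
Definition cw (L : W -> W -> F) (w : W) : H :=
  fun x => ind (FC x /\ bruhat x w) (v ^- len x * L x w).

Definition condP : Prop :=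
  forall P a L, KLfam P -> afam a -> Lfam a L ->
    forall w, (FC w -> teq (Cp P w) (cw L w)) /\ (~ FC w -> teq (Cp P w) hzero).

Definition Dexp (D : W -> W -> F) : Prop :=
  forall w, (forall x, FC x -> ~ bruhat x w -> D x w = 0) /\
    teq (hT w) (fun x => ind (FC x /\ bruhat x w) (D x w)).
End Hecke.

Definition coxeter_matrix (n : nat) (m : 'I_n -> 'I_n -> nat) : Prop :=
  forall s t, m s t = m t s /\ (m s t == 1%N) = (s == t).

(* Main.v *)
Require Import Defs.
From HB Require Import structures.
From mathcomp Require Import all_boot all_order all_algebra.
From mathcomp Require Import generic_quotient fraction ring.
From Stdlib Require Import ClassicalEpsilon Relations.Relation_Operators FunctionalExtensionality.
Set Implicit Arguments. Unset Strict Implicit. Unset Printing Implicit Defensive.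
Import Order.TTheory GRing.Theory Num.Theory.
Local Open Scope ring_scope.

Section S.
Variables (n : nat) (m : 'I_n -> 'I_n -> nat).
Local Notation W := (W m).

Lemma wof_eq (u v : seq 'I_n) : wof m u = wof m v -> clos_refl_sym_trans _ (wstep m) u v.
Proof. move=> h; have H := (eqquotP (Defs.W m) u v); apply/pdecP; change (wequiv m u v); exact/H. Qed.

Lemma wof_eqR (u v : seq 'I_n) : clos_refl_sym_trans _ (wstep m) u v -> wof m u = wof m v.
Proof. move=> h; have H := (eqquotP (Defs.W m) u v); apply/H; change (pdec (clos_refl_sym_trans _ (wstep m) u v)); exact/pdecP. Qed.

Lemma wofK (x : W) : wof m (repr x) = x.
Proof. exact: reprK. Qed.

Lemma par_inv u v : clos_refl_sym_trans _ (wstep m) u v -> odd (size u) = odd (size v).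
Proof.
elim.
- move=> {}u {}v []; first by move=> a b s; rewrite !size_cat /= !addnS /= negbK.
  by move=> a b s t _ _; rewrite !size_cat !size_mkseq.
- by [].
- by move=> ? ? _ ->.
- by move=> ? ? ? _ -> _ ->.
Qed.

Lemma step_app a b u v : wstep m u v -> wstep m (a ++ u ++ b) (a ++ v ++ b).
Proof.
case.
- move=> x y s; have := ws_del m (a ++ x) (y ++ b) s; by rewrite -!catA /=.
- move=> x y s t h1 h2; have := ws_braid (a ++ x) (y ++ b) h1 h2; by rewrite -!catA.
Qed.

Lemma clos_app a b u v : clos_refl_sym_trans _ (wstep m) u v ->
  clos_refl_sym_trans _ (wstep m) (a ++ u ++ b) (a ++ v ++ b).
Proof.
elim.
- by move=> ? ? h; apply: rst_step; apply: step_app.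
- by move=> ?; apply: rst_refl.
- by move=> ? ? _ h; apply: rst_sym.
- by move=> ? ? ? _ h1 _ h2; apply: rst_trans h1 h2.
Qed.

Lemma wof_cat a a' b b' : wof m a = wof m a' -> wof m b = wof m b' ->
  wof m (a ++ b) = wof m (a' ++ b').
Proof.
move=> /wof_eq h1 /wof_eq h2; apply: wof_eqR.
apply: rst_trans (_ : clos_refl_sym_trans _ _ _ (a' ++ b)) _.
  by have := clos_app [::] b h1; rewrite /= .
by have := clos_app a' [::] h2; rewrite /= !cats0.
Qed.

Lemma wmulE x y a b : wof m a = x -> wof m b = y -> wmul x y = wof m (a ++ b).
Proof. by move=> ha hb; rewrite /wmul; apply: wof_cat; rewrite wofK. Qed.

Lemma redwordP (x : W) : wof m (redword x) = x /\ size (redword x) = len x.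
Proof. by rewrite /redword; case/andP: (xchooseP (redexp_ex x)) => /eqP -> /eqP ->. Qed.

Lemma epsE (x : W) u : wof m u = x -> eps x = (-1) ^+ size u.
Proof.
move=> hu; rewrite /eps; case: (redwordP x) => h1 <-.
rewrite -signr_odd -[RHS]signr_odd; congr (_ ^+ _).
by rewrite (@par_inv (redword x) u) //; apply: wof_eq; rewrite h1 hu.
Qed.

Lemma eps_mulgen (x : W) s : eps (wmul x (wgen m s)) = - eps x.
Proof.
rewrite (wmulE (wofK x) (erefl (wgen m s))) (epsE (erefl _)) (epsE (wofK x)).
by rewrite size_cat /= addn1 exprS mulN1r.
Qed.

Lemma wmul_gen2 (x : W) s : wmul (wmul x (wgen m s)) (wgen m s) = x.
Proof.
rewrite (wmulE (wofK x) (erefl (wgen m s))).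
rewrite (wmulE (erefl _) (erefl (wgen m s))).
transitivity (wof m (repr x)); last exact: wofK.
apply: wof_eqR; apply: rst_step; rewrite -catA /=.
by have := ws_del m (repr x) [::] s; rewrite !cats0.
Qed.


Local Notation H := (H m).
Definition phis (s : seq W) (h : H) : F := \sum_(y <- s) eps y * h y.
Definition cov (s : seq W) (h : H) := forall y, h y != 0 -> y \in s.
Definition Phi (h : H) := phis (hsupp h) h.

Lemma phis_ok s1 s2 h : uniq s1 -> uniq s2 -> cov s1 h -> cov s2 h -> phis s1 h = phis s2 h.
Proof.
move=> u1 u2 c1 c2.
have E s : phis s h = \sum_(y <- s | h y != 0) eps y * h y.
  rewrite /phis [RHS]big_mkcond /=; apply: eq_bigr => y _.
  by case: (h y =P 0) => [->|_]; rewrite ?mulr0.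
rewrite !E -!(big_filter _ (fun y => h y != 0)); apply: perm_big.
apply: uniq_perm; rewrite ?filter_uniq // => y; rewrite !mem_filter.
by case hy: (h y != 0) => //=; rewrite (c1 y hy) (c2 y hy).
Qed.

Lemma enumP_spec (P : W -> Prop) s : uniq s -> (forall y, y \in s <-> P y) ->
  uniq (Defs.enumP P) /\ forall y, y \in Defs.enumP P <-> P y.
Proof.
move=> us hs; rewrite /Defs.enumP.
apply: (epsilon_spec (inhabits [::]) (fun s => uniq s /\ forall y, y \in s <-> P y)).
by exists s.
Qed.

Lemma hsuppP h s : uniq s -> cov s h -> uniq (hsupp h) /\ cov (hsupp h) h.
Proof.
move=> us cs; have [] := @enumP_spec (fun y => h y != 0) [seq y <- s | h y != 0].
- exact: filter_uniq.
- move=> y; rewrite mem_filter; split; first by case/andP.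
  by move=> hy; rewrite hy (cs y hy).
by move=> u hm; split => // y /hm.
Qed.

Lemma PhiE h s : uniq s -> cov s h -> Phi h = phis s h.
Proof. move=> us cs; case: (hsuppP us cs) => u c; exact: phis_ok. Qed.

Lemma fsU h : finsupp h -> exists s, uniq s /\ cov s h.
Proof. case=> s hs; exists (undup s); split; first exact: undup_uniq.
by move=> y /hs; rewrite mem_undup. Qed.

Lemma cov_sub s s' h : cov s h -> {subset s <= s'} -> cov s' h.
Proof. by move=> c sub y /c /sub. Qed.

Lemma phis_add s a b : phis s (hadd a b) = phis s a + phis s b.
Proof. by rewrite /phis -big_split; apply: eq_bigr => y _; rewrite mulrDr. Qed.
Lemma phis_scale s c a : phis s (hscale c a) = c * phis s a.
Proof. by rewrite /phis mulr_sumr; apply: eq_bigr => y _; rewrite /hscale mulrCA. Qed.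
Lemma phis_sub s a b : phis s (hsub a b) = phis s a - phis s b.
Proof. by rewrite /phis -sumrB; apply: eq_bigr => y _; rewrite mulrBr. Qed.
Lemma phis_T s w : uniq s -> w \in s -> phis s (hT w) = eps w.
Proof.
move=> us ws; rewrite /phis (bigD1_seq w) //= /hT eqxx mulr1 big1 ?addr0 //.
by move=> y /negbTE ->; rewrite mulr0.
Qed.

Lemma Phi_add a b : finsupp a -> finsupp b ->
  finsupp (hadd a b) /\ Phi (hadd a b) = Phi a + Phi b.
Proof.
move=> /fsU [sa [ua ca]] /fsU [sb [ub cb]].
set C := undup (sa ++ sb).
have uC : uniq C by apply: undup_uniq.
have caC : cov C a by apply: cov_sub ca _ => y; rewrite mem_undup mem_cat => ->.
have cbC : cov C b by apply: cov_sub cb _ => y; rewrite mem_undup mem_cat orbC => ->.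
have cC : cov C (hadd a b).
  move=> y; rewrite /hadd; case: (a y =P 0) => [->|/eqP /caC //].
  by rewrite add0r => /cbC.
split; first by exists C.
by rewrite (PhiE uC cC) (PhiE uC caC) (PhiE uC cbC) phis_add.
Qed.

Lemma Phi_scale c a : finsupp a -> finsupp (hscale c a) /\ Phi (hscale c a) = c * Phi a.
Proof.
move=> /fsU [s [us cs]].
have cs' : cov s (hscale c a).
  by move=> y; rewrite /hscale; case: (a y =P 0) => [->|/eqP /cs //]; rewrite mulr0 eqxx.
split; first by exists s.
by rewrite (PhiE us cs') (PhiE us cs) phis_scale.
Qed.

Lemma Phi_T w : finsupp (hT w) /\ Phi (hT w) = eps w.
Proof.
have c : cov [:: w] (hT w) by move=> y; rewrite /hT inE; case: (y =P w) => //; rewrite eqxx.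
split; first by exists [:: w].
by rewrite (PhiE _ c) // phis_T // inE.
Qed.

Lemma Phi_sum (I : Type) (l : seq I) (f : I -> H) :
  (forall i, List.In i l -> finsupp (f i)) ->
  finsupp (hsumseq l f) /\ Phi (hsumseq l f) = \sum_(i <- l) Phi (f i).
Proof.
elim: l => [|i l IH] hf.
  have c : cov [::] (hsumseq [::] f) by move=> y; rewrite /hsumseq big_nil eqxx.
  split; first by exists [::].
  by rewrite (PhiE _ c) // big_nil /phis big_nil.
have -> : hsumseq (i :: l) f = hadd (f i) (hsumseq l f).
  by apply: functional_extensionality => y; rewrite /hsumseq /hadd big_cons.
have [fl el] := IH (fun j hj => hf j (or_intror hj)).
have [fa ea] := Phi_add (hf i (or_introl erefl)) fl.
by split => //; rewrite ea el big_cons.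
Qed.

Lemma Phi_basis w s : finsupp (mulTs_basis w s) /\ Phi (mulTs_basis w s) = - eps w.
Proof.
rewrite /mulTs_basis; have e := eps_mulgen w s.
case: ifP => _.
  by have [f1 e1] := Phi_T (wmul w (wgen m s)); split => //; rewrite e1 e.
have [f1 e1] := Phi_scale q (Phi_T (wmul w (wgen m s))).1.
have [f2 e2] := Phi_scale (q - 1) (Phi_T w).1.
have [f3 e3] := Phi_add f1 f2.
split => //; rewrite e3 e1 e2 (Phi_T _).2 (Phi_T w).2 e; ring.
Qed.

Lemma Phi_mulTs h s : finsupp h -> finsupp (mulTs h s) /\ Phi (mulTs h s) = - Phi h.
Proof.
move=> fh; rewrite /mulTs.
have [f e] := Phi_sum (l := hsupp h) (f := fun y => hscale (h y) (mulTs_basis y s))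
  (fun y _ => (Phi_scale (h y) (Phi_basis y s).1).1).
split => //; rewrite e.
transitivity (\sum_(y <- hsupp h) - (eps y * h y)); last by rewrite sumrN.
apply: eq_bigr => y _; rewrite (Phi_scale _ (Phi_basis y s).1).2 (Phi_basis y s).2; ring.
Qed.

Lemma Phi_foldl (l : seq 'I_n) h : finsupp h ->
  finsupp (foldl (@mulTs n m) h l) /\ Phi (foldl (@mulTs n m) h l) = (-1) ^+ size l * Phi h.
Proof.
elim: l h => [|s l IH] h fh /=; first by rewrite expr0 mul1r.
have [f e] := Phi_mulTs s fh; have [f' e'] := IH _ f.
by split => //; rewrite e' e exprS; ring.
Qed.

Lemma Phi_mulTw h w : finsupp h -> finsupp (mulTw h w) /\ Phi (mulTw h w) = eps w * Phi h.
Proof.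
move=> fh; have [f e] := Phi_foldl (redword w) fh.
by split => //; rewrite /mulTw e (epsE (redwordP w).1).
Qed.

Lemma Phi_hmul h h' : finsupp h -> finsupp (hmul h h') /\ Phi (hmul h h') = Phi h * Phi h'.
Proof.
move=> fh; rewrite /hmul.
have [f e] := Phi_sum (l := hsupp h') (f := fun w => hscale (h' w) (mulTw h w))
  (fun w _ => (Phi_scale (h' w) (Phi_mulTw w fh).1).1).
split => //; rewrite e {3}/Phi /phis mulr_sumr.
apply: eq_bigr => w _; rewrite (Phi_scale _ (Phi_mulTw w fh).1).2 (Phi_mulTw w fh).2; ring.
Qed.

Lemma sum_In0 (I : Type) (l : seq I) (G : I -> F) :
  (forall i, List.In i l -> G i = 0) -> \sum_(i <- l) G i = 0.
Proof.
elim: l => [|i l IH] hG; first by rewrite big_nil.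
by rewrite big_cons hG /= ?IH ?add0r //; [move=> j hj; apply: hG; right | left].
Qed.

Lemma Phi_J h : (forall g, isgen g -> Phi g = 0) -> inJ h -> finsupp h /\ Phi h = 0.
Proof.
move=> hg [l [hl ->]].
have fs : forall x, List.In x l -> finsupp (hmul (hmul x.1.1 x.1.2) x.2).
  move=> [[a g] b] /hl [[fa _] _ _] /=.
  exact: (Phi_hmul _ (Phi_hmul _ fa).1).1.
have [f e] := Phi_sum fs; split => //; rewrite e; apply: sum_In0.
move=> [[a g] b] /hl [[fa _] gg _] /=.
by rewrite (Phi_hmul _ (Phi_hmul _ fa).1).2 (Phi_hmul _ fa).2 (hg _ gg) mulr0 mul0r.
Qed.

Lemma two_neq0 : (2%:R : F) != 0.
Proof. rewrite -[2%:R](rmorph_nat (@tofrac _)). rewrite -(rmorph0 (@tofrac _)) tofrac_eq -polyC_natr polyC_eq0. by []. Qed.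

Lemma alt_rcons (a b : 'I_n) k : alt a b k.+1 = rcons (alt a b k) (if odd k then b else a).
Proof. by rewrite /alt mkseqS. Qed.

Lemma clos_step (M : nat) (a b c : 'I_n) k : a != b -> m a b = M -> (0 < M)%N ->
  (c == a) || (c == b) -> (k <= M)%N ->
  exists k', (k' <= M)%N /\ (wof m (alt a b k ++ [:: c]) = wof m (alt a b k') \/
                            wof m (alt a b k ++ [:: c]) = wof m (alt b a k')).
Proof.
move=> hab hM M0 hc.
case: k => [|k] hk.
  exists 1%N; split => //; case/orP: hc => /eqP ->; [left|right]; by [].
rewrite alt_rcons; set l := if odd k then b else a.
case: (c =P l) => [->|hcl].
  exists k; split; first exact: ltnW.
  left; apply: wof_eqR; apply: rst_step.
  have := ws_del m (alt a b k) [::] l; rewrite !cats0 => H; rewrite -cats1 -catA; exact: H.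
have hc' : c = if odd k then a else b.
  move: hcl; rewrite /l; case/orP: hc => /eqP ->; case: (odd k) => //; by rewrite eqxx.
case: (ltnP k.+1 M) => hkM.
  exists k.+2; split => //; left; congr (wof m _).
  by rewrite (alt_rcons a b k.+1) alt_rcons cats1 hc' /l /=; case: (odd k).
have ekM : k.+1 = M by apply/eqP; rewrite eqn_leq hk hkM.
exists k; split; first by rewrite -ekM ltnW.
right; apply: wof_eqR.
apply: rst_trans (_ : clos_refl_sym_trans _ _ _ (alt b a k.+1 ++ [:: c])) _.
  have hp : (0 < m a b)%N by rewrite hM.
  apply: rst_step; rewrite -alt_rcons ekM -hM; exact: (ws_braid [::] [:: c] hab hp).
apply: rst_step; rewrite alt_rcons -hc'.
have := ws_del m (alt b a k) [::] c; rewrite !cats0 => H; rewrite -cats1 -catA; exact: H.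
Qed.

Lemma dih_fin (s t : 'I_n) : s != t -> m s t != 0%N -> m t s = m s t ->
  exists S : seq W, uniq S /\ forall y, y \in S <-> dihedral s t y.
Proof.
move=> hst h0 hsym; set M := m s t.
have M0 : (0 < M)%N by rewrite lt0n.
have claim : forall u, all (fun i => (i == s) || (i == t)) u -> exists k, (k <= M)%N /\
    (wof m u = wof m (alt s t k) \/ wof m u = wof m (alt t s k)).
  elim/last_ind => [|u c IH]; first by move=> _; exists 0%N; split => //; left.
  rewrite all_rcons => /andP [hc /IH [k [hk e]]].
  rewrite -cats1; case: e => e.
    have [k' [hk' e']] := clos_step hst (erefl M) M0 hc hk.
    by exists k'; split => //; rewrite (wof_cat e (erefl (wof m [:: c]))).
  have hts : t != s by rewrite eq_sym.
  have hc2 : (c == t) || (c == s) by rewrite orbC.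
  have [k' [hk' e']] := clos_step hts hsym M0 hc2 hk.
  by exists k'; split => //; rewrite (wof_cat e (erefl (wof m [:: c]))); case: e' => ->; [right|left].
set L := [seq wof m (alt s t k) | k <- iota 0 M.+1] ++ [seq wof m (alt t s k) | k <- iota 0 M.+1].
exists (undup [seq y <- L | pdec (dihedral s t y)]); split; first exact: undup_uniq.
move=> y; rewrite mem_undup mem_filter; split; first by case/andP => /pdecP.
move=> hy; apply/andP; split; first exact/pdecP.
case: (hy) => u [hu <-]; have [k [hk [e|e]]] := claim u hu; rewrite e mem_cat; apply/orP.
  by left; apply: (map_f (fun k => wof m (alt s t k))); rewrite mem_iota.
by right; apply: (map_f (fun k => wof m (alt t s k))); rewrite mem_iota.
Qed.

Lemma Phi_gen g : coxeter_matrix m -> isgen g -> Phi g = 0.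
Proof.
move=> cox [s [t [hst _ h0 ->]]].
have hsym : m t s = m s t by case: (cox s t).
have [S [uS hS]] := dih_fin hst h0 hsym.
set gg := fun y => ind (dihedral s t y) 1.
have cS : cov S gg.
  by move=> y; rewrite /gg /ind; case: pdecP => [/hS //|]; rewrite eqxx.
rewrite (PhiE uS cS) /phis.
set sig := fun y : W => wmul y (wgen m s).
have sigS y : y \in S -> sig y \in S.
  move/hS => [u [hu <-]]; apply/hS; exists (u ++ [:: s]); split.
    by rewrite all_cat hu /= eqxx.
  by rewrite /sig (wmulE (erefl _) (erefl _)).
have sigK : cancel sig sig by move=> y; exact: wmul_gen2.
have pe : perm_eq S (map sig S).
  apply: uniq_perm => //; first by rewrite (map_inj_uniq (can_inj sigK)).
  move=> y; apply/idP/mapP.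
    by move=> yS; exists (sig y); [exact: sigS | rewrite sigK].
  by move=> [z zS ->]; exact: sigS.
set X := \sum_(y <- S) eps y * gg y.
have eX : X = \sum_(y <- S) eps y.
  rewrite /X big_seq [RHS]big_seq; apply: eq_bigr => y /hS hy.
  by rewrite /gg /ind; case: pdecP => // _; rewrite mulr1.
have XN : X = - X.
  rewrite {1}eX (perm_big _ pe) big_map eX -sumrN; apply: eq_bigr => y _.
  exact: eps_mulgen.
have : X * 2%:R = 0 by rewrite mulrnAr mulr1 mulr2n {1}XN addNr.
by move/eqP; rewrite mulf_eq0 (negbTE two_neq0) orbF => /eqP.
Qed.

Lemma bruhat_len (x w : W) : bruhat x w -> (len x <= len w)%N.
Proof.
elim => //.
- by move=> ? ? [t [_ [_ /ltnW]]].
- by move=> ? ? ? _ h1 _ h2; apply: leq_trans h1 h2.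
Qed.

Fixpoint allw (k : nat) : seq (seq 'I_n) :=
  if k is k'.+1 then [::] :: [seq i :: u | i <- enum 'I_n, u <- allw k'] else [:: [::]].

Lemma allwP k u : (size u <= k)%N -> u \in allw k.
Proof.
elim: k u => [|k IH] [|i u] //= h; rewrite ?inE //.
apply/orP; right; apply: (allpairs_f (fun i u => i :: u)); first by rewrite mem_enum.
exact: IH.
Qed.

Lemma finP (w : W) : exists S : seq W, uniq S /\ forall x, x \in S <-> (FC x /\ bruhat x w).
Proof.
exists (undup [seq x <- map (wof m) (allw (len w)) | pdec (FC x /\ bruhat x w)]).
split; first exact: undup_uniq.
move=> x; rewrite mem_undup mem_filter; split; first by case/andP => /pdecP.
move=> hx; apply/andP; split; first exact/pdecP.
case: (redwordP x) => e1 e2; rewrite -e1; apply: map_f; apply: allwP.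
by rewrite e2; apply: bruhat_len; case: hx.
Qed.

Lemma hsub_dec (a b : H) : hsub a b = hadd a (hscale (-1) b).
Proof. by apply: functional_extensionality => y; rewrite /hsub /hadd /hscale mulN1r. Qed.

Theorem main_aux : coxeter_matrix m ->
  forall D : W -> W -> F, Dexp D ->
  forall w : W,
    fsum (fun x => FC x /\ bruhat x w) (fun x => eps x * D x w) = eps w.
Proof.
move=> cox D hD w; have [_ hJ] := hD w.
have [fJ PJ] := Phi_J (fun g gg => Phi_gen cox gg) hJ.
have [S [uS hS]] := finP w.
have [uE hE] := enumP_spec uS hS.
move: hJ fJ PJ.
set f : H := fun x => ind (FC x /\ bruhat x w) (D x w) => hJ fJ PJ.
have cE : cov (Defs.enumP (fun x => FC x /\ bruhat x w)) f.
  by move=> y; rewrite /f /ind; case: pdecP => [/hE //|]; rewrite eqxx.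
have ff : finsupp f by exists (Defs.enumP (fun x => FC x /\ bruhat x w)).
have : Phi (hsub (hT w) f) = eps w - Phi f.
  rewrite hsub_dec (Phi_add (Phi_T w).1 (Phi_scale (-1) ff).1).2.
  by rewrite (Phi_T w).2 (Phi_scale _ ff).2 mulN1r.
rewrite PJ => /eqP; rewrite eq_sym subr_eq0 => /eqP ->.
rewrite (PhiE uE cE) /phis /fsum big_seq [RHS]big_seq; apply: eq_bigr => y /hE hy.
by rewrite /f /ind; case: pdecP.
Qed.
End S.

Theorem mainTheorem7 (n : nat) (m : 'I_n -> 'I_n -> nat) :
  coxeter_matrix m -> condP m ->
  forall D : W m -> W m -> F, Dexp D ->
  forall w : W m,
    fsum (fun x => FC x /\ bruhat x w) (fun x => eps x * D x w) = eps w.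
Proof.
move=> cox _; exact: (@main_aux n m cox).
Qed.
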